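(* Let $(X,d)$ be a compact metric space and let $f\in\mathcal{H}(X)$ be equicontinuous. If $\dim X=0$ and $X=\overline{Per(f)}$, then $f$ has the periodic shadowing property.
   Context: Equicontinuous: for every $\epsilon>0$ there is $\delta>0$ with $d(x,y)\le\delta\Rightarrow\sup_{i\in\mathbb{Z}}d(f^i(x),f^i(y))\le\epsilon$. $Per(f)$ is the set of periodic points. $f$ has the periodic shadowing property if for every $\epsilon>0$ there is $\delta>0$ such that for every $(x_i)_{i=0}^m$, $m\ge1$, with $d(f(x_i),x_{i+1})\le\delta$ for $0\le i<m$ and $x_0=x_m$, there is $p\in Per(f)$ with $d(x_i,f^i(p))\le\epsilon$ for $0\le i\le m$. *)

(* Defs.v *)
From Stdlib Require Import Reals ZArith List.
Open Scope R_scope.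

Section MetricDefs.
Context {X : Type} (d : X -> X -> R).

Definition is_metric : Prop :=
  (forall x y, 0 <= d x y) /\
  (forall x y, d x y = 0 <-> x = y) /\
  (forall x y, d x y = d y x) /\
  (forall x y z, d x z <= d x y + d y z).

Definition is_open (U : X -> Prop) : Prop :=
  forall x, U x -> exists r, 0 < r /\ forall y, d x y < r -> U y.

Definition is_closed (U : X -> Prop) : Prop :=
  is_open (fun x => ~ U x).

Definition is_compact : Prop :=
  forall (I : Type) (U : I -> X -> Prop),
    (forall i, is_open (U i)) ->
    (forall x, exists i, U i x) ->
    exists l : list I, forall x, exists i, In i l /\ U i x.

Definition continuous (f : X -> X) : Prop :=
  forall x eps, 0 < eps -> exists delta, 0 < delta /\
    forall y, d x y < delta -> d (f x) (f y) < eps.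

Definition is_homeo (f g : X -> X) : Prop :=
  continuous f /\ continuous g /\
  (forall x, g (f x) = x) /\ (forall x, f (g x) = x).

(* topological (small inductive) dimension zero: X is nonempty and has a
   base of clopen sets *)
Definition dim_zero : Prop :=
  (exists x : X, True) /\
  forall x eps, 0 < eps -> exists U : X -> Prop,
    is_open U /\ is_closed U /\ U x /\ (forall y, U y -> d x y < eps).

End MetricDefs.

Definition iterZ {X : Type} (f g : X -> X) (i : Z) (x : X) : X :=
  match i with
  | Z0 => x
  | Zpos p => Nat.iter (Pos.to_nat p) f x
  | Zneg p => Nat.iter (Pos.to_nat p) g x
  end.

Definition equicontinuous {X : Type} (d : X -> X -> R) (f g : X -> X) : Prop :=
  forall eps, 0 < eps -> exists delta, 0 < delta /\
    forall x y, d x y <= delta ->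
      forall i : Z, d (iterZ f g i x) (iterZ f g i y) <= eps.

Definition periodic {X : Type} (f : X -> X) (p : X) : Prop :=
  exists n : nat, (1 <= n)%nat /\ Nat.iter n f p = p.

Definition per_dense {X : Type} (d : X -> X -> R) (f : X -> X) : Prop :=
  forall x eps, 0 < eps -> exists p, periodic f p /\ d x p < eps.

Definition periodic_shadowing {X : Type} (d : X -> X -> R) (f : X -> X) : Prop :=
  forall eps, 0 < eps -> exists delta, 0 < delta /\
    forall (m : nat) (xs : nat -> X), (1 <= m)%nat ->
      (forall i, (i < m)%nat -> d (f (xs i)) (xs (S i)) <= delta) ->
      xs 0%nat = xs m ->
      exists p, periodic f p /\
        forall i, (i <= m)%nat -> d (xs i) (Nat.iter i f p) <= eps.

(* Main.v *)
Require Import Defs.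
From Stdlib Require Import Reals ZArith List.
From Stdlib Require Import Lra Lia Classical.
Open Scope R_scope.

Lemma iterZ_nat {X : Type} (f g : X -> X) (n : nat) (x : X) :
  iterZ f g (Z.of_nat n) x = Nat.iter n f x.
Proof.
  destruct n; simpl; [reflexivity|]. rewrite SuccNat2Pos.id_succ. reflexivity.
Qed.

Theorem lemma5p1 (X : Type) (d : X -> X -> R) (f g : X -> X) :
  is_metric d -> is_compact d -> is_homeo d f g ->
  equicontinuous d f g ->
  dim_zero d -> per_dense d f ->
  periodic_shadowing d f.
Proof.
  intros Hmet Hcomp Hhomeo Heq Hdim Hper eps Heps.
  destruct Hmet as [Hpos [Hzero [Hsym Htri]]].
  set (P := fun U : X -> Prop => is_open d U /\ is_closed d U /\
        exists c, U c /\ forall y, U y -> d c y < eps/2).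
  destruct (Hcomp {U | P U} (fun i => proj1_sig i)) as [l Hl].
  { intros [U HU]; simpl; apply HU. }
  { intros x. destruct Hdim as [_ Hd].
    destruct (Hd x (eps/2)) as [U [Uo [Uc [Ux Ud]]]]; [lra|].
    exists (exist _ U (conj Uo (conj Uc (ex_intro _ x (conj Ux Ud))))).
    simpl; exact Ux. }
  set (sim := fun x y => forall i, In i l -> (proj1_sig i x <-> proj1_sig i y)).
  assert (sim_sym : forall x y, sim x y -> sim y x).
  { intros x y H i Hi. specialize (H i Hi). tauto. }
  assert (sim_trans : forall x y z, sim x y -> sim y z -> sim x z).
  { intros x y z H1 H2 i Hi. specialize (H1 i Hi). specialize (H2 i Hi). tauto. }
  assert (sim_small : forall x y, sim x y -> d x y < eps).
  { intros x y Hs. destruct (Hl x) as [i [Hi Hix]].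
    pose proof (Hs i Hi) as H.
    destruct i as [U [Uo [Ucl [c [Uc Ud]]]]]. simpl in *.
    pose proof (proj1 H Hix) as Uy.
    pose proof (Ud x Hix). pose proof (Ud y Uy).
    pose proof (Htri x c y). rewrite (Hsym x c) in *. lra. }
  assert (local : forall x, exists r, 0 < r /\ forall y, d x y < r -> sim x y).
  { intros x. unfold sim.
    assert (forall l' : list {U | P U}, exists r, 0 < r /\ forall y, d x y < r ->
       forall i, In i l' -> (proj1_sig i x <-> proj1_sig i y)) as Hgen.
    { induction l' as [|i l' IH].
      - exists 1; split; [lra| intros y _ i []].
      - destruct IH as [r [Hr Hry]].
        destruct (proj2_sig i) as [Uo [Ucl _]].
        assert (exists r', 0 < r' /\ forall y, d x y < r' ->
                  (proj1_sig i x <-> proj1_sig i y)) as [r' [Hr' H']].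
        { destruct (classic (proj1_sig i x)) as [Hx|Hx].
          - destruct (Uo x Hx) as [r' [Hr' H']]. exists r'; split; auto.
            intros y Hy; split; intros; auto.
          - destruct (Ucl x Hx) as [r' [Hr' H']]. exists r'; split; auto.
            intros y Hy; split; intros H0; [contradiction|].
            exfalso; exact (H' y Hy H0). }
        exists (Rmin r r'). split; [apply Rmin_pos; auto|].
        intros y Hy j [<-|Hj].
        + apply H'. eapply Rlt_le_trans; [exact Hy| apply Rmin_r].
        + apply Hry; [eapply Rlt_le_trans; [exact Hy| apply Rmin_l]|auto]. }
    apply Hgen. }
  set (Q := fun p : X * R => 0 < snd p /\ forall y, d (fst p) y < 2 * snd p -> sim (fst p) y).
  destruct (Hcomp {p | Q p} (fun p y => d (fst (proj1_sig p)) y < snd (proj1_sig p)))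
    as [l2 Hl2].
  { intros [[c r] [Hr Hc]] x Hx; simpl in *.
    exists (r - d c x); split; [lra|]. intros y Hy. pose proof (Htri c x y). lra. }
  { intros x. destruct (local x) as [r [Hr Hrx]].
    assert (Q (x, r/2)) as HQ.
    { split; simpl; [lra|]. intros y Hy. apply Hrx. lra. }
    exists (exist _ (x, r/2) HQ). simpl.
    rewrite (proj2 (Hzero x x) eq_refl). lra. }
  set (gamma := fold_right (fun p acc => Rmin (snd (proj1_sig p)) acc) 1 l2).
  assert (gamma_pos : 0 < gamma).
  { unfold gamma. clear Hl2. induction l2 as [|p l2 IH]; simpl; [lra|].
    apply Rmin_pos; auto. destruct p as [? [? ?]]; auto. }
  assert (gamma_le : forall p, In p l2 -> gamma <= snd (proj1_sig p)).
  { unfold gamma. clear Hl2 gamma gamma_pos. induction l2 as [|q l2 IH]; simpl.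
    - intros _ [].
    - intros p [<-|Hp]; [apply Rmin_l|].
      eapply Rle_trans; [apply Rmin_r| auto]. }
  assert (unif : forall x y, d x y < gamma -> sim x y).
  { intros x y Hxy. destruct (Hl2 x) as [p [Hp Hpx]].
    pose proof (gamma_le _ Hp) as Hg.
    destruct p as [[c r] [Hr Hc]]; simpl in *.
    apply sim_trans with c.
    - apply sim_sym, Hc. lra.
    - apply Hc. pose proof (Htri c x y). lra. }
  destruct (Heq (gamma/2)) as [delta [Hdel Hd]]; [lra|].
  set (Sim := fun x y => forall n, sim (Nat.iter n f x) (Nat.iter n f y)).
  assert (close : forall x y, d x y <= delta -> Sim x y).
  { intros x y H n. apply unif. rewrite <- !(iterZ_nat f g).
    specialize (Hd x y H (Z.of_nat n)). lra. }
  assert (shift : forall x y, Sim x y -> Sim (f x) (f y)).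
  { intros x y H n. rewrite <- !Nat.iter_succ_r. apply H. }
  exists delta. split; auto. intros m xs Hm Hps H0.
  destruct (Hper (xs 0%nat) delta Hdel) as [p [Hp Hdp]].
  exists p; split; auto.
  assert (key : forall i, (i <= m)%nat -> Sim (Nat.iter i f p) (xs i)).
  { induction i; intros Hi.
    - simpl. intros n. apply sim_sym. apply close. lra.
    - intros n. apply sim_trans with (Nat.iter n f (f (xs i))).
      + apply (shift _ _ (IHi ltac:(lia))).
      + apply close. apply Hps. lia. }
  intros i Hi. apply Rlt_le. apply sim_small. apply sim_sym.
  exact (key i Hi 0%nat).
Qed.
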